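(* Let $m\in\{1,2\}$ and $\gamma\in(\gamma_1,3]$. Then for every $z\in(0,z_2]$ one has $C(V_1;\gamma,z,P_8)>C_1$. Consequently any $z\in(0,z_M]$ with $C(V_1;\gamma,z,P_8)=C_1$ lies in $(z_2,z_M]$.
   Context: Fix $m\in\{1,2\}$. For $z>0$ put $\lambda=1+m\gamma z$, $a_1=1+\frac{m(\gamma-1)}{2}$, $a_2=\frac{m(\gamma-1)+mz\gamma(\gamma-3)}{2}$, $a_3=\frac{mz\gamma(\gamma-1)}{2}$, $G(V,C;\gamma,z)=C^2[(m+1)V+2mz]-V(1+V)(\lambda+V)$, $F(V,C;\gamma,z)=C\{C^2[1+\frac{mz}{1+V}]-a_1(1+V)^2+a_2(1+V)-a_3\}$; ODE $\frac{dC}{dV}=\frac FG$. $V_1=-\frac2{\gamma+1}$, $C_1=\frac{\sqrt{2\gamma(\gamma-1)}}{\gamma+1}$. $z_M=(\sqrt\gamma+\sqrt2)^{-2}$; $w(z)=\sqrt{1-2(\gamma+2)z+(\gamma-2)^2z^2}$, $V_8=\frac{-1+(\gamma-2)z+w}{2}$, $C_8=1+V_8$, $P_8=(V_8,C_8)$. $z_2=\frac{\sqrt{33}-3}{6+2\sqrt{33}+4\gamma}$ (the value with $C_8=\sqrt{-\frac32V_8}$). $\gamma_1=1+\sqrt2$. For $z\in(0,z_M]$, $C(\cdot;\gamma,z,P_8):[V_1,V_8]\to(0,\infty)$ is the real-analytic solution of the ODE near $V_8$ with $C(V_8)=C_8$ and $C'(V_8)$ equal to the unique negative root of $-G_Cc^2+(F_C-G_V)c+F_V=0$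 (partials at $P_8$), continued to $[V_1,V_8]$. *)

(* Defs.v *)
From Stdlib Require Import Reals Lra.
From Coquelicot Require Import Coquelicot.
Open Scope R_scope.

Definition lam (m gamma z : R) : R := 1 + m * gamma * z.
Definition a1 (m gamma z : R) : R := 1 + m * (gamma - 1) / 2.
Definition a2 (m gamma z : R) : R := (m * (gamma - 1) + m * z * gamma * (gamma - 3)) / 2.
Definition a3 (m gamma z : R) : R := m * z * gamma * (gamma - 1) / 2.

Definition Gf (m gamma z V C : R) : R :=
  C ^ 2 * ((m + 1) * V + 2 * m * z) - V * (1 + V) * (lam m gamma z + V).
Definition Ff (m gamma z V C : R) : R :=
  C * (C ^ 2 * (1 + m * z / (1 + V)) - a1 m gamma z * (1 + V) ^ 2
       + a2 m gamma z * (1 + V) - a3 m gamma z).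

Definition wz (m gamma z : R) : R :=
  sqrt (1 - 2 * (gamma + 2) * z + (gamma - 2) ^ 2 * z ^ 2).
Definition V8 (m gamma z : R) : R := (-1 + (gamma - 2) * z + wz m gamma z) / 2.
Definition C8 (m gamma z : R) : R := 1 + V8 m gamma z.

Definition GC8 (m gamma z : R) : R :=
  Derive (fun C => Gf m gamma z (V8 m gamma z) C) (C8 m gamma z).
Definition GV8 (m gamma z : R) : R :=
  Derive (fun V => Gf m gamma z V (C8 m gamma z)) (V8 m gamma z).
Definition FC8 (m gamma z : R) : R :=
  Derive (fun C => Ff m gamma z (V8 m gamma z) C) (C8 m gamma z).
Definition FV8 (m gamma z : R) : R :=
  Derive (fun V => Ff m gamma z V (C8 m gamma z)) (V8 m gamma z).

Definition is_neg_slope (m gamma z c : R) : Prop :=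
  c < 0 /\ - GC8 m gamma z * c ^ 2 + (FC8 m gamma z - GV8 m gamma z) * c
           + FV8 m gamma z = 0.

Definition V1g (gamma : R) : R := - 2 / (gamma + 1).
Definition C1g (gamma : R) : R := sqrt (2 * gamma * (gamma - 1)) / (gamma + 1).
Definition zM (gamma : R) : R := / (sqrt gamma + sqrt 2) ^ 2.
Definition z2 (gamma : R) : R := (sqrt 33 - 3) / (6 + 2 * sqrt 33 + 4 * gamma).
Definition gamma1 : R := 1 + sqrt 2.

(* Sol m gamma z C : C is the solution C(.; gamma, z, P8) on [V1, V8]:
   - near V8 (on the left, up to and including V8) C is given by a convergent
     power series centred at V8 (real-analytic at V8), with C(V8) = C8 and
     C'(V8) = the negative root c;
   - on [V1, V8) C solves dC/dV = F/G (with G <> 0 along the curve),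
     C is continuous at V1 from the right, and C > 0 on [V1, V8]. *)
Definition Sol (m gamma z : R) (C : R -> R) : Prop :=
  let v1 := V1g gamma in
  let v8 := V8 m gamma z in
  v1 < v8 /\
  (exists (r : R) (a : nat -> R) (c : R),
      0 < r /\ is_neg_slope m gamma z c /\
      a 0%nat = C8 m gamma z /\ a 1%nat = c /\
      (forall x, Rabs (x - v8) < r -> ex_pseries a (x - v8)) /\
      (forall x, v8 - r < x <= v8 -> is_pseries a (x - v8) (C x))) /\
  (forall V, v1 <= V < v8 ->
      Gf m gamma z V (C V) <> 0) /\
  (forall V, v1 < V < v8 ->
      is_derive C V (Ff m gamma z V (C V) / Gf m gamma z V (C V))) /\
  filterlim C (at_right v1) (locally (C v1)) /\
  (forall V, v1 <= V <= v8 -> 0 < C V).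

(* Main.v *)
Require Import Defs.
From Stdlib Require Import Reals.
From Coquelicot Require Import Coquelicot.
From Stdlib Require Import Lra Lia QArith Qreals List.
Open Scope R_scope.
Open Scope R_scope.

Inductive expr := Ec (q:Q) | Ex (i:nat) | Eadd (a b:expr) | Emul (a b:expr).

Fixpoint eval (env : list R) (e:expr) : R :=
  match e with
  | Ec q => Q2R q
  | Ex i => nth i env 0
  | Eadd a b => eval env a + eval env b
  | Emul a b => eval env a * eval env b
  end.

Definition qmin (a b : Q) : Q := if Qle_bool a b then a else b.
Definition qmax (a b : Q) : Q := if Qle_bool a b then b else a.

Fixpoint ieval (box : list (Q*Q)) (e:expr) : Q*Q :=
  match e with
  | Ec q => (q,q)
  | Ex i => nth i box (0%Q,0%Q)
  | Eadd a b => let (l1,h1) := ieval box a in let (l2,h2) := ieval box b in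
                (Qred (l1+l2), Qred (h1+h2))
  | Emul a b => let (l1,h1) := ieval box a in let (l2,h2) := ieval box b in
      let p1 := Qred (l1*l2) in let p2 := Qred (l1*h2) in
      let p3 := Qred (h1*l2) in let p4 := Qred (h1*h2) in
      (qmin (qmin p1 p2) (qmin p3 p4), qmax (qmax p1 p2) (qmax p3 p4))
  end.

Definition inbox (env : list R) (box : list (Q*Q)) : Prop :=
  forall i, Q2R (fst (nth i box (0%Q,0%Q))) <= nth i env 0 <= Q2R (snd (nth i box (0%Q,0%Q))).

Lemma Q2R_red q : Q2R (Qred q) = Q2R q.
Proof. apply Qeq_eqR. apply Qred_correct. Qed.

Lemma qmin_le a b : Q2R (qmin a b) = Rmin (Q2R a) (Q2R b).
Proof.
  unfold qmin. destruct (Qle_bool a b) eqn:E.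
  - apply Qle_bool_iff in E. apply Qle_Rle in E. rewrite Rmin_left; auto.
  - assert (~ (a <= b)%Q) as H. { intro H. apply Qle_bool_iff in H. congruence. }
    apply Qnot_le_lt in H. apply Qlt_Rlt in H. rewrite Rmin_right; lra.
Qed.

Lemma qmax_le a b : Q2R (qmax a b) = Rmax (Q2R a) (Q2R b).
Proof.
  unfold qmax. destruct (Qle_bool a b) eqn:E.
  - apply Qle_bool_iff in E. apply Qle_Rle in E. rewrite Rmax_right; auto.
  - assert (~ (a <= b)%Q) as H. { intro H. apply Qle_bool_iff in H. congruence. }
    apply Qnot_le_lt in H. apply Qlt_Rlt in H. rewrite Rmax_left; lra.
Qed.

Lemma mul_bounds a b c d x y : a <= x <= b -> c <= y <= d ->
  Rmin (Rmin (a*c) (a*d)) (Rmin (b*c) (b*d)) <= x*y <=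
  Rmax (Rmax (a*c) (a*d)) (Rmax (b*c) (b*d)).
Proof.
  intros Hx Hy.
  assert (H1: Rmin (a*y) (b*y) <= x*y <= Rmax (a*y) (b*y)).
  { destruct (Rle_dec 0 y).
    - assert (a*y <= x*y) by nra. assert (x*y <= b*y) by nra.
      split; [apply Rle_trans with (a*y); [apply Rmin_l|lra] | apply Rle_trans with (b*y); [lra|apply Rmax_r]].
    - assert (x*y <= a*y) by nra. assert (b*y <= x*y) by nra.
      split; [apply Rle_trans with (b*y); [apply Rmin_r|lra] | apply Rle_trans with (a*y); [lra|apply Rmax_l]]. }
  assert (Ha: Rmin (a*c) (a*d) <= a*y <= Rmax (a*c) (a*d)).
  { destruct (Rle_dec 0 a).
    - assert (a*c <= a*y) by nra. assert (a*y <= a*d) by nra.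
      split; [apply Rle_trans with (a*c); [apply Rmin_l|lra] | apply Rle_trans with (a*d); [lra|apply Rmax_r]].
    - assert (a*y <= a*c) by nra. assert (a*d <= a*y) by nra.
      split; [apply Rle_trans with (a*d); [apply Rmin_r|lra] | apply Rle_trans with (a*c); [lra|apply Rmax_l]]. }
  assert (Hb: Rmin (b*c) (b*d) <= b*y <= Rmax (b*c) (b*d)).
  { destruct (Rle_dec 0 b).
    - assert (b*c <= b*y) by nra. assert (b*y <= b*d) by nra.
      split; [apply Rle_trans with (b*c); [apply Rmin_l|lra] | apply Rle_trans with (b*d); [lra|apply Rmax_r]].
    - assert (b*y <= b*c) by nra. assert (b*d <= b*y) by nra.
      split; [apply Rle_trans with (b*d); [apply Rmin_r|lra] | apply Rle_trans with (b*c); [lra|apply Rmax_l]]. }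
  split.
  - apply Rle_trans with (Rmin (a*y) (b*y)); [|apply H1].
    apply Rmin_glb.
    + apply Rle_trans with (Rmin (a*c) (a*d)); [apply Rmin_l|apply Ha].
    + apply Rle_trans with (Rmin (b*c) (b*d)); [apply Rmin_r|apply Hb].
  - apply Rle_trans with (Rmax (a*y) (b*y)); [apply H1|].
    apply Rmax_lub.
    + apply Rle_trans with (Rmax (a*c) (a*d)); [apply Ha|apply Rmax_l].
    + apply Rle_trans with (Rmax (b*c) (b*d)); [apply Hb|apply Rmax_r].
Qed.

Lemma ieval_sound env box e : inbox env box ->
  Q2R (fst (ieval box e)) <= eval env e <= Q2R (snd (ieval box e)).
Proof.
  intro Hb. induction e as [q|i|a IHa b IHb|a IHa b IHb]; cbn [ieval eval fst snd].
  - lra.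
  - apply Hb.
  - destruct (ieval box a) as [l1 h1]. destruct (ieval box b) as [l2 h2]. cbn [fst snd] in *.
    rewrite !Q2R_red, !Q2R_plus. lra.
  - destruct (ieval box a) as [l1 h1]. destruct (ieval box b) as [l2 h2]. cbn [fst snd] in *.
    rewrite !qmin_le, !qmax_le, !Q2R_red, !Q2R_mult.
    apply mul_bounds; lra.
Qed.

Fixpoint upd (box : list (Q*Q)) (d:nat) (x : Q*Q) : list (Q*Q) :=
  match box, d with
  | nil, _ => nil
  | _ :: r, O => x :: r
  | y :: r, S d' => y :: upd r d' x
  end.

Lemma nth_upd box d x i : (d < length box)%nat ->
  nth i (upd box d x) (0%Q,0%Q) = if Nat.eqb i d then x else nth i box (0%Q,0%Q).
Proof.
  revert d i. induction box as [|y r IH]; intros d i Hd; simpl in Hd. lia.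
  destruct d as [|d'], i as [|i']; simpl; try reflexivity.
  all: try (destruct i'; reflexivity).
  rewrite IH by lia. reflexivity.
Qed.

Lemma length_upd box d x : length (upd box d x) = length box.
Proof. revert d. induction box; intros [|d]; simpl; auto. Qed.

Fixpoint widest (box : list (Q*Q)) (k : nat) (bd : nat) (bw : Q) : nat :=
  match box with
  | nil => bd
  | (l,h) :: r => if Qle_bool bw (h - l)%Q then widest r (S k) k (h-l)%Q else widest r (S k) bd bw
  end.

Lemma widest_lt box k bd bw : (bd < k + length box \/ length box = 0)%nat ->
   (widest box k bd bw < k + length box \/ (widest box k bd bw = bd))%nat.
Proof.
  revert k bd bw. induction box as [|[l h] r IH]; intros k bd bw H1; simpl; auto.
  destruct (Qle_bool bw (h-l)%Q).
  - destruct (IH (S k) k (h-l)%Q) as [A|A]; simpl in *; lia.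
  - destruct (IH (S k) bd bw) as [A|A]; simpl in *; lia.
Qed.

Lemma widest_bound box : (0 < length box)%nat -> (widest box 0 0 (-1)%Q < length box)%nat.
Proof.
  intro H. destruct (widest_lt box 0 0 (-1)%Q) as [A|A]; simpl; lia.
Qed.

Definition qlt (a b : Q) : bool := negb (Qle_bool b a).

Lemma qlt_ok a b : qlt a b = true -> Q2R a < Q2R b.
Proof. unfold qlt. intro H. apply Qlt_Rlt. apply Qnot_le_lt. intro H'.
  apply Qle_bool_iff in H'. rewrite H' in H. discriminate. Qed.

Fixpoint check (fuel:nat) (e ec : expr) (box : list (Q*Q)) : bool :=
  if qlt 0 (fst (ieval box e)) then true else
  if qlt (snd (ieval box ec)) 0 then true else
  match fuel with
  | O => false
  | S f => let d := widest box 0 0 (-1)%Q in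
           let (l,h) := nth d box (0%Q,0%Q) in
           let m := Qred ((l+h)/2) in
           if check f e ec (upd box d (l,m)) then check f e ec (upd box d (m,h)) else false
  end.

Lemma Q2R0 : Q2R 0 = 0.
Proof. unfold Q2R; simpl; lra. Qed.

Lemma check_sound fuel e ec box env : (0 < length box)%nat -> check fuel e ec box = true ->
  inbox env box -> 0 <= eval env ec -> 0 < eval env e.
Proof.
  revert box. induction fuel as [|f IH]; intros box Hl Hc Hin Hec; cbn [check] in Hc.
  all: destruct (qlt 0 (fst (ieval box e))) eqn:E1;
    [ apply qlt_ok in E1; pose proof (ieval_sound env box e Hin); rewrite Q2R0 in E1; lra | ].
  all: destruct (qlt (snd (ieval box ec)) 0) eqn:E2;
    [ apply qlt_ok in E2; pose proof (ieval_sound env box ec Hin); rewrite Q2R0 in E2; lra | ].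
  - discriminate.
  - set (d := widest box 0 0 (-1)%Q) in Hc.
    assert (Hd : (d < length box)%nat) by (apply widest_bound; auto).
    destruct (nth d box (0%Q,0%Q)) as [l h] eqn:Hn.
    destruct (check f e ec (upd box d (l, Qred ((l + h) / 2)))) eqn:H1; [|discriminate].
    rename Hc into H2.
    destruct (Rle_dec (nth d env 0) (Q2R (Qred ((l+h)/2)))) as [Hm|Hm].
    + apply (IH _ (eq_ind_r (fun n => (0 < n)%nat) Hl (length_upd _ _ _)) H1); auto.
      intro i. rewrite nth_upd by auto. destruct (Nat.eqb_spec i d) as [->|Hne]; cbn [fst snd].
      * specialize (Hin d). rewrite Hn in Hin. cbn [fst snd] in Hin. lra.
      * apply Hin.
    + apply (IH _ (eq_ind_r (fun n => (0 < n)%nat) Hl (length_upd _ _ _)) H2); auto.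
      intro i. rewrite nth_upd by auto. destruct (Nat.eqb_spec i d) as [->|Hne]; cbn [fst snd].
      * specialize (Hin d). rewrite Hn in Hin. cbn [fst snd] in Hin. lra.
      * apply Hin.
Qed.
Definition G2_1 : expr := (Eadd (Emul (Eadd (Emul (Eadd (Emul (Eadd (Emul (Eadd (Emul (Eadd (Emul (Ec ((-784)#1)) (Ex 2)) (Ec ((-3052)#1))) (Ex 2)) (Ec ((-2534)#1))) (Ex 2)) (Ec ((-1029)#2))) (Ex 1)) (Eadd (Emul (Eadd (Emul (Eadd (Emul (Ec (245#2)) (Ex 2)) (Ec (16359#8))) (Ex 2)) (Ec (85183#16))) (Ex 2)) (Ec (92953#64)))) (Ex 0)) (Eadd (Emul (Eadd (Emul (Eadd (Emul (Eadd (Emul (Eadd (Emul (Ec (784#1)) (Ex 2)) (Ec (1036#1))) (Ex 2)) (Ec ((-5252)#1))) (Ex 2)) (Ec ((-6162)#1))) (Ex 1)) (Eadd (Emul (Eadd (Emul (Eadd (Emul (Ec ((-735)#1)) (Ex 2)) (Ec ((-23261)#4))) (Ex 2)) (Ec ((-14113)#2))) (Ex 2)) (Ec (117689#16)))) (Ex 1)) (Eadd (Emul (Eadd (Emul (Eadd (Emul (Ec (6125#64)) (Ex 2)) (Ec (477015#256))) (Ex 2)) (Ec (2537165#256))) (Ex 2)) (Ec (1748305#128))))) (Ex 0)) (Eadd (Emul (Eadd (Emul (Eadd (Emul (Eadd (Emul (Eadd (Emul (Ec (2800#1)) (Ex 2)) (Ec (13050#1))) (Ex 2)) (Ec (31025#2)))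 (Ex 1)) (Eadd (Emul (Eadd (Emul (Eadd (Emul (Ec (245#1)) (Ex 2)) (Ec (7245#4))) (Ex 2)) (Ec (39865#16))) (Ex 2)) (Ec (122585#64)))) (Ex 1)) (Eadd (Emul (Eadd (Emul (Eadd (Emul (Ec ((-1225)#8)) (Ex 2)) (Ec ((-140105)#64))) (Ex 2)) (Ec ((-3586565)#512))) (Ex 2)) (Ec ((-3865865)#2048)))) (Ex 1)) (Eadd (Emul (Eadd (Emul (Eadd (Emul (Ec (18375#1024)) (Ex 2)) (Ec (1803375#4096))) (Ex 2)) (Ec (52677375#16384))) (Ex 2)) (Ec (467631375#65536))))).
Definition H2_1 : expr := (Eadd (Emul (Eadd (Emul (Eadd (Emul (Eadd (Emul (Eadd (Emul (Eadd (Emul (Eadd (Emul (Eadd (Emul (Ec ((-21952)#1)) (Ex 2)) (Ec ((-154952)#1))) (Ex 2)) (Ec ((-382740)#1))) (Ex 2)) (Ec ((-781179)#2))) (Ex 2)) (Ec ((-272151)#2))) (Ex 1)) (Eadd (Emul (Eadd (Emul (Eadd (Emul (Eadd (Emul (Ec (3430#1)) (Ex 2)) (Ec (272461#4))) (Ex 2)) (Ec (2694233#8))) (Ex 2)) (Ec (39601767#64))) (Ex 2)) (Ec (24584307#64)))) (Ex 0)) (Eadd (Emul (Eadd (Emul (Eadd (Emul (Eadd (Emul (Eadd (Emul (Eadd (Emul (Ec (65856#1)) (Ex 2)) (Ec (412608#1))) (Ex 2)) (Ec (754108#1))) (Ex 2)) (Ec (285505#1))) (Ex 2)) (Ec ((-408633)#4)))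 (Ex 1)) (Eadd (Emul (Eadd (Emul (Eadd (Emul (Eadd (Emul (Ec ((-19208)#1)) (Ex 2)) (Ec ((-536431)#2))) (Ex 2)) (Ec ((-2291755)#2))) (Ex 2)) (Ec ((-56543311)#32))) (Ex 2)) (Ec ((-33377413)#64)))) (Ex 1)) (Eadd (Emul (Eadd (Emul (Eadd (Emul (Eadd (Emul (Ec (22295#16)) (Ex 2)) (Ec (1861839#64))) (Ex 2)) (Ec (38840709#256))) (Ex 2)) (Ec (191058329#512))) (Ex 2)) (Ec (2175601347#4096))))) (Ex 0)) (Eadd (Emul (Eadd (Emul (Eadd (Emul (Eadd (Emul (Eadd (Emul (Eadd (Emul (Eadd (Emul (Ec ((-43904)#1)) (Ex 2)) (Ec ((-122808)#1))) (Ex 2)) (Ec (587244#1))) (Ex 2)) (Ec (4502421#2))) (Ex 2)) (Ec (1677281#1))) (Ex 1)) (Eadd (Emul (Eadd (Emul (Eadd (Emul (Eadd (Emul (Ec (17836#1)) (Ex 2)) (Ec (1102969#4))) (Ex 2)) (Ec (9620535#8))) (Ex 2)) (Ec (94002829#64))) (Ex 2)) (Ec ((-5971953)#8)))) (Ex 1)) (Eadd (Emul (Eadd (Emul (Eadd (Emul (Eadd (Emul (Ec (39445#8)) (Ex 2)) (Ec ((-4572393)#128))) (Ex 2)) (Ec ((-118961419)#256))) (Ex 2)) (Ec ((-3824746701)#2048))) (Ex 2)) (Ec ((-3254177053)#1024)))) (Ex 1)) (Eadd (Emul (Eadd (Emul (Eadd (Emul (Eadd (Emul (Ec ((-265825)#256))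 (Ex 2)) (Ec ((-62502825)#4096))) (Ex 2)) (Ec ((-443237175)#8192))) (Ex 2)) (Ec ((-16706382725)#65536))) (Ex 2)) (Ec ((-2978007525)#4096))))) (Ex 0)) (Eadd (Emul (Eadd (Emul (Eadd (Emul (Eadd (Emul (Eadd (Emul (Eadd (Emul (Eadd (Emul (Ec ((-156800)#1)) (Ex 2)) (Ec ((-1179700)#1))) (Ex 2)) (Ec ((-2888350)#1))) (Ex 2)) (Ec ((-9078525)#4))) (Ex 1)) (Eadd (Emul (Eadd (Emul (Eadd (Emul (Eadd (Emul (Ec ((-13720)#1)) (Ex 2)) (Ec ((-507955)#2))) (Ex 2)) (Ec ((-5687095)#4))) (Ex 2)) (Ec ((-94725695)#32))) (Ex 2)) (Ec ((-52940565)#32)))) (Ex 1)) (Eadd (Emul (Eadd (Emul (Eadd (Emul (Eadd (Emul (Ec ((-1715)#2)) (Ex 2)) (Ec (838845#64))) (Ex 2)) (Ec (5206075#64))) (Ex 2)) (Ec (577347145#1024))) (Ex 2)) (Ec (3448572435#2048)))) (Ex 1)) (Eadd (Emul (Eadd (Emul (Eadd (Emul (Eadd (Emul (Ec (351575#128)) (Ex 2)) (Ec (79308635#2048))) (Ex 2)) (Ec (722473455#4096))) (Ex 2)) (Ec (22471213495#32768))) (Ex 2)) (Ec (48220787845#32768)))) (Ex 1)) (Eadd (Emul (Eadd (Emul (Eadd (Emul (Eadd (Emul (Ec ((-728875)#2048)) (Ex 2)) (Ec ((-541072525)#65536))) (Ex 2)) (Ec ((-11487105775)#262144))) (Ex 2))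 (Ec (7336773325#1048576))) (Ex 2)) (Ec (1076689601175#4194304))))).
Definition NQ_1 : expr := (Eadd (Emul (Eadd (Emul (Eadd (Emul (Eadd (Emul (Eadd (Emul (Eadd (Emul (Ec ((-1568)#1)) (Ex 2)) (Ec ((-11797)#1))) (Ex 2)) (Ec ((-57767)#2))) (Ex 2)) (Ec ((-363141)#16))) (Ex 1)) (Eadd (Emul (Eadd (Emul (Eadd (Emul (Ec ((-833)#1)) (Ex 2)) (Ec ((-195173)#32))) (Ex 2)) (Ec ((-785047)#64))) (Ex 2)) (Ec ((-1349333)#512)))) (Ex 1)) (Eadd (Emul (Eadd (Emul (Eadd (Emul (Ec (12005#32)) (Ex 2)) (Ec (3008537#1024))) (Ex 2)) (Ec (23913939#2048))) (Ex 2)) (Ec (348903753#16384)))) (Ex 1)) (Eadd (Emul (Eadd (Emul (Eadd (Emul (Ec ((-33075)#1024)) (Ex 2)) (Ec ((-8688735)#32768))) (Ex 2)) (Ec (80947755#65536))) (Ex 2)) (Ec (3256360785#524288)))).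
Definition NF_1 : expr := (Eadd (Emul (Eadd (Emul (Eadd (Emul (Eadd (Emul (Eadd (Emul (Ec ((-1)#1)) (Ex 2)) (Ec ((-13)#2))) (Ex 2)) (Ec ((-133)#16))) (Ex 1)) (Eadd (Emul (Eadd (Emul (Ec ((-17)#32)) (Ex 2)) (Ec ((-221)#64))) (Ex 2)) (Ec (1835#512)))) (Ex 1)) (Eadd (Emul (Eadd (Emul (Ec (245#1024)) (Ex 2)) (Ec (7281#2048))) (Ex 2)) (Ec (311113#16384)))) (Ex 1)) (Eadd (Emul (Eadd (Emul (Ec ((-675)#32768)) (Ex 2)) (Ec (101817#65536))) (Ex 2)) (Ec (4444497#524288)))).
Definition G2_2 : expr := (Eadd (Emul (Eadd (Emul (Eadd (Emul (Eadd (Emul (Eadd (Emul (Eadd (Emul (Ec ((-2352)#1)) (Ex 2)) (Ec ((-9156)#1))) (Ex 2)) (Ec ((-8852)#1))) (Ex 2)) (Ec ((-2481)#1))) (Ex 1)) (Eadd (Emul (Eadd (Emul (Eadd (Emul (Ec (735#2)) (Ex 2)) (Ec (49077#8))) (Ex 2)) (Ec (129337#8))) (Ex 2)) (Ec (224117#32)))) (Ex 0)) (Eadd (Emul (Eadd (Emul (Eadd (Emul (Eadd (Emul (Eadd (Emul (Ec (2352#1)) (Ex 2)) (Ec (3892#1))) (Ex 2)) (Ec ((-10792)#1))) (Ex 2)) (Ec ((-17175)#1))) (Ex 1)) (Eadd (Emul (Eadd (Emul (Eadd (Emul (Ec ((-2205)#1)) (Ex 2)) (Ec ((-67627)#4)))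 (Ex 2)) (Ec ((-19788)#1))) (Ex 2)) (Ec (223113#16)))) (Ex 1)) (Eadd (Emul (Eadd (Emul (Eadd (Emul (Ec (18375#64)) (Ex 2)) (Ec (1404585#256))) (Ex 2)) (Ec (3762605#128))) (Ex 2)) (Ec (39706085#1024))))) (Ex 0)) (Eadd (Emul (Eadd (Emul (Eadd (Emul (Eadd (Emul (Eadd (Emul (Ec (8400#1)) (Ex 2)) (Ec (40700#1))) (Ex 2)) (Ec (55000#1))) (Ex 1)) (Eadd (Emul (Eadd (Emul (Eadd (Emul (Ec (735#1)) (Ex 2)) (Ec (22715#4))) (Ex 2)) (Ec (101195#8))) (Ex 2)) (Ec (400825#16)))) (Ex 1)) (Eadd (Emul (Eadd (Emul (Eadd (Emul (Ec ((-3675)#8)) (Ex 2)) (Ec ((-409535)#64))) (Ex 2)) (Ec ((-4840215)#256))) (Ex 2)) (Ec (72505#32)))) (Ex 1)) (Eadd (Emul (Eadd (Emul (Eadd (Emul (Ec (55125#1024)) (Ex 2)) (Ec (5277825#4096))) (Ex 2)) (Ec (75234525#8192))) (Ex 2)) (Ec (341535075#16384))))).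
Definition H2_2 : expr := (Eadd (Emul (Eadd (Emul (Eadd (Emul (Eadd (Emul (Eadd (Emul (Eadd (Emul (Eadd (Emul (Eadd (Emul (Ec ((-43904)#1)) (Ex 2)) (Ec ((-309904)#1))) (Ex 2)) (Ec ((-765480)#1))) (Ex 2)) (Ec ((-781179)#1))) (Ex 2)) (Ec ((-272151)#1))) (Ex 1)) (Eadd (Emul (Eadd (Emul (Eadd (Emul (Eadd (Emul (Ec (6860#1)) (Ex 2)) (Ec (272461#2))) (Ex 2)) (Ec (2694233#4))) (Ex 2)) (Ec (39601767#32))) (Ex 2)) (Ec (24584307#32)))) (Ex 0)) (Eadd (Emul (Eadd (Emul (Eadd (Emul (Eadd (Emul (Eadd (Emul (Eadd (Emul (Ec (109760#1)) (Ex 2)) (Ec (666064#1))) (Ex 2)) (Ec (1185376#1))) (Ex 2)) (Ec (462158#1))) (Ex 2)) (Ec ((-329109)#2))) (Ex 1)) (Eadd (Emul (Eadd (Emul (Eadd (Emul (Eadd (Emul (Ec ((-31556)#1)) (Ex 2)) (Ec ((-481992)#1))) (Ex 2)) (Ec ((-4116183)#2))) (Ex 2)) (Ec ((-50119883)#16))) (Ex 2)) (Ec ((-36491257)#32)))) (Ex 1)) (Eadd (Emul (Eadd (Emul (Eadd (Emul (Eadd (Emul (Ec (36015#16)) (Ex 2)) (Ec (3427963#64))) (Ex 2)) (Ec (22605757#64))) (Ex 2)) (Ec (59689621#64))) (Ex 2)) (Ec (2089244487#2048))))) (Ex 0)) (Eadd (Emul (Eadd (Emul (Eadd (Emul (Eadd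 (Emul (Eadd (Emul (Eadd (Emul (Eadd (Emul (Ec ((-65856)#1)) (Ex 2)) (Ec ((-164864)#1))) (Ex 2)) (Ec (912128#1))) (Ex 2)) (Ec (3332873#1))) (Ex 2)) (Ec (2652100#1))) (Ex 1)) (Eadd (Emul (Eadd (Emul (Eadd (Emul (Eadd (Emul (Ec (33614#1)) (Ex 2)) (Ec (490210#1))) (Ex 2)) (Ec (1948004#1))) (Ex 2)) (Ec (75474737#32))) (Ex 2)) (Ec ((-5467807)#16)))) (Ex 1)) (Eadd (Emul (Eadd (Emul (Eadd (Emul (Eadd (Emul (Ec (142345#16)) (Ex 2)) (Ec ((-959581)#16))) (Ex 2)) (Ec ((-28118663)#32))) (Ex 2)) (Ec ((-3169176113)#1024))) (Ex 2)) (Ec ((-1080627117)#256)))) (Ex 1)) (Eadd (Emul (Eadd (Emul (Eadd (Emul (Eadd (Emul (Ec ((-1003275)#512)) (Ex 2)) (Ec ((-1991885)#64))) (Ex 2)) (Ec ((-136570265)#1024))) (Ex 2)) (Ec ((-13227563065)#32768))) (Ex 2)) (Ec ((-13957788945)#16384))))) (Ex 0)) (Eadd (Emul (Eadd (Emul (Eadd (Emul (Eadd (Emul (Eadd (Emul (Eadd (Emul (Eadd (Emul (Ec ((-235200)#1)) (Ex 2)) (Ec ((-1774200)#1))) (Ex 2)) (Ec ((-4498300)#1))) (Ex 2)) (Ec ((-7753125)#2))) (Ex 1)) (Eadd (Emul (Eadd (Emul (Eadd (Emul (Eadd (Emul (Ec ((-20580)#1)) (Ex 2)) (Ec ((-374920)#1)))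 (Ex 2)) (Ec ((-2137685)#1))) (Ex 2)) (Ec ((-80093435)#16))) (Ex 2)) (Ec ((-64508675)#16)))) (Ex 1)) (Eadd (Emul (Eadd (Emul (Eadd (Emul (Eadd (Emul (Ec ((-1715)#8)) (Ex 2)) (Ec (623875#16))) (Ex 2)) (Ec (9467955#64))) (Ex 2)) (Ec (108982885#512))) (Ex 2)) (Ec (774004535#1024)))) (Ex 1)) (Eadd (Emul (Eadd (Emul (Eadd (Emul (Eadd (Emul (Ec (1157625#256)) (Ex 2)) (Ec (984095#16))) (Ex 2)) (Ec (237748345#1024))) (Ex 2)) (Ec (10059472435#16384))) (Ex 2)) (Ec (20958812435#16384)))) (Ex 1)) (Eadd (Emul (Eadd (Emul (Eadd (Emul (Eadd (Emul (Ec ((-5102125)#8192)) (Ex 2)) (Ec ((-60977875)#4096))) (Ex 2)) (Ec ((-11576522375)#131072))) (Ex 2)) (Ec ((-49803883375)#524288))) (Ex 2)) (Ec (430740288375#2097152))))).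
Definition NQ_2 : expr := (Eadd (Emul (Eadd (Emul (Eadd (Emul (Eadd (Emul (Eadd (Emul (Eadd (Emul (Ec ((-2352)#1)) (Ex 2)) (Ec ((-17742)#1))) (Ex 2)) (Ec ((-44983)#1))) (Ex 2)) (Ec ((-310125)#8))) (Ex 1)) (Eadd (Emul (Eadd (Emul (Eadd (Emul (Ec ((-2499)#2)) (Ex 2)) (Ec ((-148119)#16))) (Ex 2)) (Ec ((-720615)#32))) (Ex 2)) (Ec ((-4069693)#256)))) (Ex 1)) (Eadd (Emul (Eadd (Emul (Eadd (Emul (Ec (36015#64)) (Ex 2)) (Ec (2232531#512))) (Ex 2)) (Ec (14550947#1024))) (Ex 2)) (Ec (179234129#8192)))) (Ex 1)) (Eadd (Emul (Eadd (Emul (Eadd (Emul (Ec ((-99225)#2048)) (Ex 2)) (Ec ((-6350805)#16384))) (Ex 2)) (Ec (32803515#32768))) (Ex 2)) (Ec (1701937305#262144)))).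
Definition NF_2 : expr := (Eadd (Emul (Eadd (Emul (Eadd (Emul (Eadd (Emul (Eadd (Emul (Ec ((-1)#1)) (Ex 2)) (Ec ((-9)#2))) (Ex 2)) (Ec ((-109)#16))) (Ex 1)) (Eadd (Emul (Eadd (Emul (Ec ((-17)#32)) (Ex 2)) (Ec ((-25)#64))) (Ex 2)) (Ec (963#512)))) (Ex 1)) (Eadd (Emul (Eadd (Emul (Ec (245#1024)) (Ex 2)) (Ec (9117#2048))) (Ex 2)) (Ec (211537#16384)))) (Ex 1)) (Eadd (Emul (Eadd (Emul (Ec ((-675)#32768)) (Ex 2)) (Ec (87237#65536))) (Ex 2)) (Ec (2864025#524288)))).
Definition LV : expr := (Eadd (Emul (Eadd (Emul (Eadd (Emul (Ec (28#1)) (Ex 2)) (Ec (199#1))) (Ex 2)) (Ec (705#2))) (Ex 1)) (Eadd (Emul (Eadd (Emul (Ec ((-35)#8)) (Ex 2)) (Ec (2397#32))) (Ex 2)) (Ec (14107#64)))).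
Definition LVsq : expr := (Eadd (Emul (Eadd (Emul (Eadd (Emul (Eadd (Emul (Eadd (Emul (Eadd (Emul (Ec (784#1)) (Ex 2)) (Ec (11144#1))) (Ex 2)) (Ec (59341#1))) (Ex 2)) (Ec (140295#1))) (Ex 2)) (Ec (497025#4))) (Ex 1)) (Eadd (Emul (Eadd (Emul (Eadd (Emul (Eadd (Emul (Ec ((-245)#1)) (Ex 2)) (Ec (4907#2))) (Ex 2)) (Ec (625151#16))) (Ex 2)) (Ec (2248589#16))) (Ex 2)) (Ec (9945435#64)))) (Ex 1)) (Eadd (Emul (Eadd (Emul (Eadd (Emul (Eadd (Emul (Ec (1225#64)) (Ex 2)) (Ec ((-83895)#128))) (Ex 2)) (Ec ((-1349371)#1024))) (Ex 2)) (Ec (10774479#1024))) (Ex 2)) (Ec (100447449#4096)))).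
Definition ECN : expr := (Eadd (Emul (Eadd (Emul (Ec ((-1)#1)) (Ex 2)) (Ec ((-15)#4))) (Ex 0)) (Eadd (Emul (Eadd (Emul (Ec (1#1)) (Ex 2)) (Ec (15#4))) (Ex 1)) (Eadd (Emul (Ec ((-15)#32)) (Ex 2)) (Ec (31#128))))).
Open Scope R_scope.
Definition B3 := (((-5)#16,71#256)::(((-325)#2048),5#32)::(((-689)#2048),1#4)::nil)%Q.
Definition B2 := (((-5)#16,(-5)#16)::(((-325)#2048),5#32)::(((-689)#2048),1#4)::nil)%Q.

Definition envs (t v g : R) := (t - 5/16) :: (v + 5/32) :: (g - 11/4) :: nil.

Lemma inbox3 t v g : 0 <= t <= 1208/2048 -> -645/2048 <= v <= 0 -> 4943/2048 <= g <= 3 ->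
  inbox (envs t v g) B3.
Proof.
  intros Ht Hv Hg i. destruct i as [|[|[|i]]]; cbn [nth envs B3 fst snd]; unfold Q2R; cbn [Qnum Qden].
  - simpl. lra.
  - simpl. lra.
  - simpl. lra.
  - destruct i; simpl; lra.
Qed.

Lemma inbox2 v g : -645/2048 <= v <= 0 -> 4943/2048 <= g <= 3 ->
  inbox (envs (0) v g) B2.
Proof.
  intros Hv Hg i. destruct i as [|[|[|i]]]; cbn [nth envs B2 fst snd]; unfold Q2R; cbn [Qnum Qden].
  - simpl. lra.
  - simpl. lra.
  - simpl. lra.
  - destruct i; simpl; lra.
Qed.

Lemma ecn_eval t v g : eval (envs t v g) ECN = v*(g+1)+2-t*(g+1).
Proof. cbn [eval nth envs ECN]. unfold Q2R. cbn [Qnum Qden]. field. Qed.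

Lemma ec0_eval t v g : 0 <= eval (envs t v g) (Ec 0).
Proof. cbn [eval]. unfold Q2R; simpl; lra. Qed.

Ltac poscheck3 E :=
  intros Ht Hv Hg Hc;
  apply (check_sound 40 E ECN B3); [simpl; lia | vm_compute; reflexivity | apply inbox3; auto | rewrite ecn_eval; auto].

Ltac poscheck2 E :=
  intros Hv Hg; 
  apply (check_sound 40 E (Ec 0) B2); [simpl; lia | vm_compute; reflexivity | apply inbox2; auto | apply ec0_eval].

Lemma pos_H2_1 t v g : 0 <= t <= 1208/2048 -> -645/2048 <= v <= 0 -> 4943/2048 <= g <= 3 ->
  0 <= v*(g+1)+2-t*(g+1) -> 0 < eval (envs t v g) H2_1.
Proof. poscheck3 H2_1. Qed.
Lemma pos_H2_2 t v g : 0 <= t <= 1208/2048 -> -645/2048 <= v <= 0 -> 4943/2048 <= g <= 3 ->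
  0 <= v*(g+1)+2-t*(g+1) -> 0 < eval (envs t v g) H2_2.
Proof. poscheck3 H2_2. Qed.
Lemma pos_G2_1 t v g : 0 <= t <= 1208/2048 -> -645/2048 <= v <= 0 -> 4943/2048 <= g <= 3 ->
  0 <= v*(g+1)+2-t*(g+1) -> 0 < eval (envs t v g) G2_1.
Proof. poscheck3 G2_1. Qed.
Lemma pos_G2_2 t v g : 0 <= t <= 1208/2048 -> -645/2048 <= v <= 0 -> 4943/2048 <= g <= 3 ->
  0 <= v*(g+1)+2-t*(g+1) -> 0 < eval (envs t v g) G2_2.
Proof. poscheck3 G2_2. Qed.
Lemma pos_NQ_1 v g : -645/2048 <= v <= 0 -> 4943/2048 <= g <= 3 -> 0 < eval (envs 0 v g) NQ_1.
Proof. poscheck2 NQ_1. Qed.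
Lemma pos_NQ_2 v g : -645/2048 <= v <= 0 -> 4943/2048 <= g <= 3 -> 0 < eval (envs 0 v g) NQ_2.
Proof. poscheck2 NQ_2. Qed.
Lemma pos_NF_1 v g : -645/2048 <= v <= 0 -> 4943/2048 <= g <= 3 -> 0 < eval (envs 0 v g) NF_1.
Proof. poscheck2 NF_1. Qed.
Lemma pos_NF_2 v g : -645/2048 <= v <= 0 -> 4943/2048 <= g <= 3 -> 0 < eval (envs 0 v g) NF_2.
Proof. poscheck2 NF_2. Qed.
Lemma pos_LV v g : -645/2048 <= v <= 0 -> 4943/2048 <= g <= 3 -> 0 < eval (envs 0 v g) LV.
Proof. poscheck2 LV. Qed.
Lemma pos_LVsq v g : -645/2048 <= v <= 0 -> 4943/2048 <= g <= 3 -> 0 < eval (envs 0 v g) LVsq.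
Proof. poscheck2 LVsq. Qed.
Definition sl (g:R) := (33 - 28*g)/50.
Definition Lf (g v V : R) := 1 + v + sl g * (V - v).
Definition Dn (g v : R) := 2 - (g-2)*v.
Definition zof (g v : R) := -v*(1+v)/Dn g v.

Lemma idG1 g v t : Dn g v <> 0 ->
  Gf 1 g (zof g v) (v-t) (Lf g v (v-t)) * Dn g v = - t * (eval (envs t v g) G2_1 / 1250).
Proof. intros H. unfold zof, Gf, Lf, sl, lam, Dn in *. cbn [eval nth envs G2_1]. unfold Q2R. cbn [Qnum Qden]. field. auto. Qed.
Lemma idG2 g v t : Dn g v <> 0 ->
  Gf 2 g (zof g v) (v-t) (Lf g v (v-t)) * Dn g v = - t * (eval (envs t v g) G2_2 / 2500).
Proof. intros H. unfold zof, Gf, Lf, sl, lam, Dn in *. cbn [eval nth envs G2_2]. unfold Q2R. cbn [Qnum Qden]. field. auto. Qed.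
Lemma idH1 g v t : Dn g v <> 0 -> 1 + (v - t) <> 0 ->
  (1 + (v-t)) * Dn g v * (Ff 1 g (zof g v) (v-t) (Lf g v (v-t)) - sl g * Gf 1 g (zof g v) (v-t) (Lf g v (v-t)))
  = t * (eval (envs t v g) H2_1 / 125000).
Proof. intros H1 H2. unfold zof, Ff, Gf, Lf, sl, a1, a2, a3, lam, Dn in *. cbn [eval nth envs H2_1]. unfold Q2R. cbn [Qnum Qden]. field. auto. Qed.
Lemma idH2 g v t : Dn g v <> 0 -> 1 + (v - t) <> 0 ->
  (1 + (v-t)) * Dn g v * (Ff 2 g (zof g v) (v-t) (Lf g v (v-t)) - sl g * Gf 2 g (zof g v) (v-t) (Lf g v (v-t)))
  = t * (eval (envs t v g) H2_2 / 125000).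
Proof. intros H1 H2. unfold zof, Ff, Gf, Lf, sl, a1, a2, a3, lam, Dn in *. cbn [eval nth envs H2_2]. unfold Q2R. cbn [Qnum Qden]. field. auto. Qed.

Lemma barrier_cond M g v V : (M = 1 \/ M = 2) -> 4943/2048 <= g <= 3 -> -645/2048 <= v < 0 ->
  -2/(g+1) <= V < v ->
  Gf M g (zof g v) V (Lf g v V) < 0 /\
  Ff M g (zof g v) V (Lf g v V) - sl g * Gf M g (zof g v) V (Lf g v V) > 0.
Proof.
  intros HM Hg Hv HV.
  assert (HD : Dn g v > 0) by (unfold Dn; nra).
  assert (HV2 : (g+1)*V + 2 >= 0).
  { destruct HV as [HV _]. apply Rmult_le_compat_l with (r := g+1) in HV; [|lra].
    replace ((g+1)*(-2/(g+1))) with (-2) in HV by (field; lra). lra. }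
  assert (Hb : 2/(g+1) <= 1208/2048).
  { apply Rmult_le_reg_r with (g+1); [lra|]. unfold Rdiv. rewrite Rmult_assoc, Rinv_l by lra. lra. }
  assert (HV1 : -2/(g+1) = - (2/(g+1))) by (unfold Rdiv; ring).
  set (t := v - V).
  assert (Ht : 0 < t <= 1208/2048) by (unfold t; lra).
  assert (Hc : 0 <= v*(g+1)+2-t*(g+1)) by (unfold t; nra).
  replace V with (v - t) by (unfold t; ring).
  assert (H1V : 1 + (v - t) > 0) by (unfold t; lra).
  destruct HM as [-> | ->].
  - pose proof (pos_G2_1 t v g ltac:(lra) ltac:(lra) Hg Hc).
    pose proof (pos_H2_1 t v g ltac:(lra) ltac:(lra) Hg Hc).
    pose proof (idG1 g v t ltac:(lra)). pose proof (idH1 g v t ltac:(lra) ltac:(lra)).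
    split.
    + assert (Gf 1 g (zof g v) (v - t) (Lf g v (v - t)) * Dn g v < 0) by (rewrite H1; nra). nra.
    + assert (0 < (1 + (v - t)) * Dn g v) by nra. nra.
  - pose proof (pos_G2_2 t v g ltac:(lra) ltac:(lra) Hg Hc).
    pose proof (pos_H2_2 t v g ltac:(lra) ltac:(lra) Hg Hc).
    pose proof (idG2 g v t ltac:(lra)). pose proof (idH2 g v t ltac:(lra) ltac:(lra)).
    split.
    + assert (Gf 2 g (zof g v) (v - t) (Lf g v (v - t)) * Dn g v < 0) by (rewrite H1; nra). nra.
    + assert (0 < (1 + (v - t)) * Dn g v) by nra. nra.
Qed.
Definition GCx (M g z v : R) : R := 2*(1+v)*((M+1)*v + 2*M*z).
Definition GVx (M g z v : R) : R := (1+v)^2*(M+1) - ((1+v)*(lam M g z+v) + v*(lam M g z+v) + v*(1+v)).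
Definition FCx (M g z v : R) : R := ((1+v)^2*(1+M*z/(1+v)) - a1 M g z*(1+v)^2 + a2 M g z*(1+v) - a3 M g z)
   + (1+v)*(2*(1+v)*(1+M*z/(1+v))).
Definition FVx (M g z v : R) : R := (1+v)*((1+v)^2*(-(M*z)/(1+v)^2) - 2*a1 M g z*(1+v) + a2 M g z).

Lemma GC8_eq M g z : GC8 M g z = GCx M g z (V8 M g z).
Proof.
  unfold GC8, C8, GCx. apply is_derive_unique. unfold Gf. auto_derive; [exact I|ring].
Qed.
Lemma GV8_eq M g z : GV8 M g z = GVx M g z (V8 M g z).
Proof.
  unfold GV8, C8, GVx. apply is_derive_unique. unfold Gf. auto_derive; [exact I|ring].
Qed.
Lemma FC8_eq M g z : 1 + V8 M g z <> 0 -> FC8 M g z = FCx M g z (V8 M g z).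
Proof.
  intro H. unfold FC8, C8, FCx. apply is_derive_unique. unfold Ff. auto_derive; [auto|field; auto].
Qed.
Lemma FV8_eq M g z : 1 + V8 M g z <> 0 -> FV8 M g z = FVx M g z (V8 M g z).
Proof.
  intro H. unfold FV8, C8, FVx. apply is_derive_unique. unfold Ff. auto_derive; [auto|field; auto].
Qed.
Definition qs (M g z v s : R) := - GCx M g z v * s^2 + (FCx M g z v - GVx M g z v) * s + FVx M g z v.

Lemma idQ1 g v : Dn g v <> 0 -> 1 + v <> 0 ->
  - qs 1 g (zof g v) v (sl g) * Dn g v = eval (envs 0 v g) NQ_1 / 1250.
Proof. intros H H'. unfold qs, GCx, GVx, FCx, FVx, zof, sl, a1, a2, a3, lam, Dn in *. cbn [eval nth envs NQ_1]. unfold Q2R. cbn [Qnum Qden]. field_simplify_eq; [ring | repeat split; auto]. Qed.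
Lemma idQ2 g v : Dn g v <> 0 -> 1 + v <> 0 ->
  - qs 2 g (zof g v) v (sl g) * Dn g v = eval (envs 0 v g) NQ_2 / 1250.
Proof. intros H H'. unfold qs, GCx, GVx, FCx, FVx, zof, sl, a1, a2, a3, lam, Dn in *. cbn [eval nth envs NQ_2]. unfold Q2R. cbn [Qnum Qden]. field_simplify_eq; [ring | repeat split; auto]. Qed.
Lemma idF1 g v : Dn g v <> 0 -> 1 + v <> 0 ->
  - FVx 1 g (zof g v) v * Dn g v = eval (envs 0 v g) NF_1 / 2.
Proof. intros H H'. unfold FVx, zof, a1, a2, a3, Dn in *. cbn [eval nth envs NF_1]. unfold Q2R. cbn [Qnum Qden]. field_simplify_eq; [ring | repeat split; auto]. Qed.
Lemma idF2 g v : Dn g v <> 0 -> 1 + v <> 0 ->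
  - FVx 2 g (zof g v) v * Dn g v = eval (envs 0 v g) NF_2 / 1.
Proof. intros H H'. unfold FVx, zof, a1, a2, a3, Dn in *. cbn [eval nth envs NF_2]. unfold Q2R. cbn [Qnum Qden]. field_simplify_eq; [ring | repeat split; auto]. Qed.

Lemma GCx_neg M g v : (M = 1 \/ M = 2) -> 4943/2048 <= g <= 3 -> -645/2048 <= v < 0 ->
  GCx M g (zof g v) v < 0.
Proof.
  intros HM Hg Hv.
  assert (HD : Dn g v > 0) by (unfold Dn; nra).
  assert (E : GCx M g (zof g v) v * Dn g v = 2*(1+v)*v*(2 - v*((M+1)*(g-2)+2*M))).
  { unfold GCx, zof, Dn in *. field_simplify_eq; [ring | lra]. }
  assert (2*(1+v)*v*(2 - v*((M+1)*(g-2)+2*M)) < 0).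
  { assert (0 < 2 - v*((M+1)*(g-2)+2*M)) by (destruct HM as [-> | ->]; nra).
    assert (2*(1+v)*v < 0) by nra. nra. }
  nra.
Qed.

Lemma slope_lt M g v c : (M = 1 \/ M = 2) -> 4943/2048 <= g <= 3 -> -645/2048 <= v < 0 ->
  V8 M g (zof g v) = v -> is_neg_slope M g (zof g v) c -> c < sl g.
Proof.
  intros HM Hg Hv H8 [Hc Hq].
  assert (HD : Dn g v > 0) by (unfold Dn; nra).
  rewrite GC8_eq, GV8_eq, FC8_eq, FV8_eq in Hq by lra. rewrite H8 in Hq.
  assert (Hqs : qs M g (zof g v) v (sl g) < 0).
  { destruct HM as [-> | ->].
    - pose proof (idQ1 g v ltac:(lra) ltac:(lra)). pose proof (pos_NQ_1 v g ltac:(lra) Hg). nra.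
    - pose proof (idQ2 g v ltac:(lra) ltac:(lra)). pose proof (pos_NQ_2 v g ltac:(lra) Hg). nra. }
  assert (Hf : FVx M g (zof g v) v < 0).
  { destruct HM as [-> | ->].
    - pose proof (idF1 g v ltac:(lra) ltac:(lra)). pose proof (pos_NF_1 v g ltac:(lra) Hg). nra.
    - pose proof (idF2 g v ltac:(lra) ltac:(lra)). pose proof (pos_NF_2 v g ltac:(lra) Hg). nra. }
  pose proof (GCx_neg M g v HM Hg Hv) as HA.
  unfold qs in Hqs.
  set (A := - GCx M g (zof g v) v) in *.
  set (B := FCx M g (zof g v) v - GVx M g (zof g v) v) in *.
  set (F0 := FVx M g (zof g v) v) in *.
  set (s := sl g) in *.
  assert (Hs : s < 0) by (unfold s, sl; lra).
  assert (HA' : A > 0) by (unfold A; lra).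
  destruct (Rlt_or_le c s) as [H|H]; auto.
  exfalso.
  assert (Hq' : A * c^2 + B*c + F0 = 0) by exact Hq.
  assert (E2 : s * (A*c^2 + B*c + F0) - c * (A*s^2 + B*s + F0) - (s - c)*F0 = A*c*s*(c - s)) by ring.
  rewrite Hq' in E2.
  assert (A*c*s*(c-s) >= 0).
  { assert (c*s > 0) by nra. assert (A*(c*s) > 0) by nra. nra. }
  assert (- c * (A * s ^ 2 + B * s + F0) > 0) by nra.
  assert (- (s - c) * F0 >= 0) by nra.
  nra.
Qed.
Lemma lt_sqrt x y : 0 <= x -> x*x < y -> x < sqrt y.
Proof. intros H1 H2. rewrite <- (sqrt_square x) by auto. apply sqrt_lt_1_alt. split; nra. Qed.
Lemma sqrt_lt' x y : 0 <= x -> 0 <= y -> y < x*x -> sqrt y < x.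
Proof. intros H1 H2 H3. rewrite <- (sqrt_square x) by auto. apply sqrt_lt_1_alt. split; nra. Qed.

Lemma zpart M g z : gamma1 < g <= 3 -> 0 < z <= z2 g ->
  4943/2048 <= g /\ -645/2048 <= V8 M g z < 0 /\ z = zof g (V8 M g z).
Proof.
  intros Hg Hz.
  assert (S2 : 2895/2048 < sqrt 2) by (apply lt_sqrt; lra).
  assert (S33a : 574456/100000 < sqrt 33) by (apply lt_sqrt; lra).
  assert (S33b : sqrt 33 < 574457/100000) by (apply sqrt_lt'; lra).
  unfold gamma1 in Hg.
  assert (Hg0 : 4943/2048 <= g) by lra.
  unfold z2 in Hz.
  assert (Hz2 : z * (6 + 2*sqrt 33 + 4*g) <= sqrt 33 - 3).
  { destruct Hz as [_ Hz]. apply Rmult_le_compat_r with (r := 6 + 2*sqrt 33 + 4*g) in Hz; [|lra].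
    unfold Rdiv in Hz. rewrite Rmult_assoc, Rinv_l in Hz by lra. lra. }
  assert (HzU : z * (17489/1000 + 4*g) <= 274457/100000) by nra.
  set (D := 1 - 2*(g+2)*z + (g-2)^2*z^2).
  assert (HD : 2*(g+2)*z <= 1) by nra.
  assert (HD0 : 0 <= D) by (unfold D; nra).
  assert (Hw : wz M g z * wz M g z = D) by (unfold wz; fold D; apply sqrt_sqrt; auto).
  assert (Hw0 : 0 <= wz M g z) by (unfold wz; apply sqrt_pos).
  set (w := wz M g z) in *.
  assert (Hv : V8 M g z = (-1 + (g-2)*z + w)/2) by reflexivity.
  set (v := V8 M g z) in *.
  assert (Hrel : z * (2 - (g-2)*v) = - v*(1+v)).
  { rewrite Hv. unfold D in Hw. nra. }
  assert (Hv0 : v < 0).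
  { assert (w < 1 - (g-2)*z).
    { assert (1 - (g-2)*z > 0) by nra.
      assert (w*w < (1 - (g-2)*z)*(1 - (g-2)*z)) by (unfold D in Hw; nra). nra. }
    lra. }
  assert (Hv1 : -645/2048 <= v).
  { set (R0 := 758/2048 - (g-2)*z).
    assert (w >= R0).
    { destruct (Rle_or_lt R0 0) as [H|H]; [lra|].
      assert (D - R0*R0 >= 0).
      { unfold D, R0. nra. }
      nra. }
    unfold R0 in *. lra. }
  split; [lra|]. split; [lra|].
  unfold zof, Dn. apply Rmult_eq_reg_r with (2 - (g-2)*v); [|nra].
  rewrite Hrel. field. nra.
Qed.
Lemma sum_ge_term (u : nat -> R) N n : (forall k, 0 <= u k) -> (n <= N)%nat -> u n <= sum_f_R0 u N.
Proof.
  intros Hu. induction N as [|N IH]; intro Hn.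
  - assert (n = 0%nat) by lia. subst. simpl. lra.
  - simpl. destruct (Nat.eq_dec n (S N)) as [->|Hne].
    + assert (0 <= sum_f_R0 u N).
      { clear IH Hn. induction N; simpl; [apply Hu|]. specialize (Hu (S N)). lra. }
      lra.
    + specialize (IH ltac:(lia)). specialize (Hu (S N)). lra.
Qed.

Lemma lim0_bounded (u : nat -> R) : is_lim_seq u 0 -> exists M, forall n, Rabs (u n) <= M.
Proof.
  intro H. apply is_lim_seq_spec in H. destruct (H (mkposreal 1 Rlt_0_1)) as [N HN].
  exists (1 + sum_f_R0 (fun k => Rabs (u k)) N). intro n.
  assert (0 <= sum_f_R0 (fun k => Rabs (u k)) N).
  { clear. induction N; simpl; [apply Rabs_pos|]. pose proof (Rabs_pos (u (S N))). lra. }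
  destruct (Compare_dec.le_lt_dec n N) as [Hn|Hn].
  - pose proof (sum_ge_term (fun k => Rabs (u k)) N n (fun k => Rabs_pos _) Hn). simpl in *. lra.
  - specialize (HN n ltac:(lia)). simpl in HN. rewrite Rminus_0_r in HN. lra.
Qed.

Lemma scal_pow x k (b : R) : scal (pow_n x k) b = b * x^k.
Proof. rewrite pow_n_pow. unfold scal; simpl. unfold mult; simpl. ring. Qed.

Lemma local_above (a : nat -> R) r c s v0 C0 (Cf : R -> R) :
  0 < r -> c < s -> a 0%nat = C0 -> a 1%nat = c ->
  (forall x, Rabs (x - v0) < r -> ex_pseries a (x - v0)) ->
  (forall x, v0 - r < x <= v0 -> is_pseries a (x - v0) (Cf x)) ->
  exists d, 0 < d /\ forall x, v0 - d < x < v0 -> Cf x > C0 + s*(x - v0).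
Proof.
  intros Hr Hcs Ha0 Ha1 Hex His.
  assert (Hx : ex_pseries a (- (r/2))).
  { replace (- (r/2)) with ((v0 - r/2) - v0) by ring. apply Hex.
    replace (v0 - r / 2 - v0) with (- (r/2)) by ring. rewrite Rabs_Ropp, Rabs_pos_eq; lra. }
  apply ex_series_lim_0 in Hx. apply lim0_bounded in Hx. destruct Hx as [M HM].
  assert (Hrad : Rbar_le (r/2) (CV_radius a)).
  { apply (proj1 (CV_radius_bounded a)). exists M. intro n. specialize (HM n).
    rewrite scal_pow in HM. rewrite Rabs_mult, <- RPow_abs in HM. rewrite Rabs_mult, <- RPow_abs.
    replace (Rabs (- (r/2))) with (r/2) in HM; [|rewrite Rabs_Ropp, Rabs_pos_eq; lra].
    replace (Rabs (r/2)) with (r/2); [|rewrite Rabs_pos_eq; lra]. exact HM. }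
  assert (H0 : Rbar_lt (Rabs 0) (CV_radius a)).
  { rewrite Rabs_R0. eapply Rbar_lt_le_trans; [|exact Hrad]. simpl. lra. }
  pose proof (is_derive_PSeries a 0 H0) as Hd.
  rewrite PSeries_0 in Hd. unfold PS_derive in Hd. rewrite Ha1 in Hd.
  replace (INR 1 * c) with c in Hd by (simpl; ring).
  apply is_derive_Reals in Hd.
  destruct (Hd ((s - c)/2) ltac:(lra)) as [del Hdel].
  exists (Rmin del r). split; [apply Rmin_pos; [apply cond_pos|lra]|].
  intros x Hxr.
  assert (Hm1 : Rmin del r <= del) by apply Rmin_l.
  assert (Hm2 : Rmin del r <= r) by apply Rmin_r.
  set (h := x - v0).
  assert (Hh : h <> 0) by (unfold h; lra).
  assert (Hh2 : Rabs h < del) by (unfold h; rewrite Rabs_left by lra; lra).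
  specialize (Hdel h Hh Hh2).
  rewrite Rplus_0_l, PSeries_0, Ha0 in Hdel.
  assert (HC : Cf x = PSeries a h).
  { symmetry. apply is_pseries_unique. apply His. lra. }
  rewrite HC. unfold h in *.
  apply Rabs_def2 in Hdel. destruct Hdel as [Hd1 Hd2].
  assert (Q : (PSeries a (x - v0) - C0) / (x - v0) < s) by lra.
  assert (x - v0 < 0) by lra.
  apply (Rmult_lt_compat_r (-(x - v0))) in Q; [|lra].
  unfold Rdiv in Q. 
  replace ((PSeries a (x - v0) - C0) * / (x - v0) * - (x - v0)) with (-(PSeries a (x - v0) - C0)) in Q by (field; lra).
  lra.
Qed.
Lemma fl_eps (f : R -> R) (F : (R -> Prop) -> Prop) l : filterlim f F (locally l) ->
  forall eps, 0 < eps -> F (fun y => Rabs (f y - l) < eps).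
Proof.
  intros H eps He. apply (H (fun t => Rabs (t - l) < eps)). exists (mkposreal eps He). intros y Hy. exact Hy.
Qed.

Lemma loc_eps (x : R) (P : R -> Prop) : locally x P -> exists d, 0 < d /\ forall y, Rabs (y - x) < d -> P y.
Proof. intros [e He]. exists e. split; [apply cond_pos|]. intros y Hy. apply He. exact Hy. Qed.

Lemma cont_eps (f : R -> R) x : filterlim f (locally x) (locally (f x)) ->
  forall eps, 0 < eps -> exists d, 0 < d /\ forall y, Rabs (y - x) < d -> Rabs (f y - f x) < eps.
Proof. intros H eps He. apply loc_eps. apply (fl_eps f _ _ H eps He). Qed.

Lemma rcont_eps (f : R -> R) x : filterlim f (at_right x) (locally (f x)) ->
  forall eps, 0 < eps -> exists d, 0 < d /\ forall y, x < y < x + d -> Rabs (f y - f x) < eps.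
Proof.
  intros H eps He. destruct (loc_eps _ _ (fl_eps f _ _ H eps He)) as [d [Hd HP]].
  exists d. split; auto. intros y Hy. apply HP; [|lra]. rewrite Rabs_pos_eq; lra.
Qed.

Lemma barrier_gen (Cf D : R -> R) (a b A s : R) :
  a < b ->
  (exists d, 0 < d /\ forall x, b - d < x < b -> Cf x > A + s*x) ->
  (forall x, a < x < b -> is_derive Cf x (D x)) ->
  filterlim Cf (at_right a) (locally (Cf a)) ->
  (forall x, a <= x < b -> Cf x = A + s*x -> exists eta, 0 < eta /\ forall y, x < y < x + eta -> D y < s) ->
  Cf a > A + s*a.
Proof.
  intros Hab [d [Hd Hloc]] Hder Hra Hcross.
  set (phi := fun x => Cf x - (A + s*x)).
  assert (Hcont : forall x, a < x < b -> forall eps, 0 < eps -> exists e, 0 < e /\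
             forall y, Rabs (y - x) < e -> Rabs (phi y - phi x) < eps).
  { intros x Hx eps He.
    assert (Hc : filterlim Cf (locally x) (locally (Cf x))).
    { assert (Hex : ex_derive Cf x) by (exists (D x); apply Hder; auto).
      exact (ex_derive_continuous Cf x Hex). }
    destruct (cont_eps _ _ Hc (eps/2) ltac:(lra)) as [e1 [He1 H1]].
    exists (Rmin e1 (eps/(2*(Rabs s + 1)))). split.
    { apply Rmin_pos; auto. apply Rdiv_lt_0_compat; [lra|]. pose proof (Rabs_pos s); lra. }
    intros y Hy. assert (Hy1 : Rabs (y - x) < e1) by (eapply Rlt_le_trans; [exact Hy|apply Rmin_l]).
    assert (Hy2 : Rabs (y - x) < eps/(2*(Rabs s + 1))) by (eapply Rlt_le_trans; [exact Hy|apply Rmin_r]).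
    specialize (H1 y Hy1). unfold phi.
    replace (Cf y - (A + s * y) - (Cf x - (A + s * x))) with ((Cf y - Cf x) - s*(y - x)) by ring.
    eapply Rle_lt_trans; [apply Rabs_triang|]. rewrite Rabs_Ropp, Rabs_mult.
    assert (Rabs s * Rabs (y - x) <= eps/2).
    { pose proof (Rabs_pos s). pose proof (Rabs_pos (y-x)).
      apply Rmult_lt_compat_l with (r := 2*(Rabs s + 1)) in Hy2; [|lra].
      replace (2 * (Rabs s + 1) * (eps / (2 * (Rabs s + 1)))) with eps in Hy2 by (field; lra).
      nra. }
    lra. }
  assert (Hrc : forall x, a <= x < b -> forall eps, 0 < eps -> exists e, 0 < e /\
             forall y, x < y < x + e -> Rabs (phi y - phi x) < eps).
  { intros x Hx eps He. destruct (Req_dec x a) as [->|Hne].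
    - destruct (rcont_eps _ _ Hra (eps/2) ltac:(lra)) as [e1 [He1 H1]].
      exists (Rmin e1 (eps/(2*(Rabs s + 1)))). split.
      { apply Rmin_pos; auto. apply Rdiv_lt_0_compat; [lra|]. pose proof (Rabs_pos s); lra. }
      intros y Hy. assert (Hy1 : a < y < a + e1) by (pose proof (Rmin_l e1 (eps/(2*(Rabs s + 1)))); lra).
      assert (Hy2 : y - a < eps/(2*(Rabs s + 1))) by (pose proof (Rmin_r e1 (eps/(2*(Rabs s + 1)))); lra).
      specialize (H1 y Hy1). unfold phi.
      replace (Cf y - (A + s * y) - (Cf a - (A + s * a))) with ((Cf y - Cf a) - s*(y - a)) by ring.
      eapply Rle_lt_trans; [apply Rabs_triang|]. rewrite Rabs_Ropp, Rabs_mult.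
      rewrite (Rabs_pos_eq (y - a)) by lra.
      assert (Rabs s * (y - a) <= eps/2).
      { pose proof (Rabs_pos s).
        apply Rmult_lt_compat_l with (r := 2*(Rabs s + 1)) in Hy2; [|lra].
        replace (2 * (Rabs s + 1) * (eps / (2 * (Rabs s + 1)))) with eps in Hy2 by (field; lra).
        nra. }
      lra.
    - destruct (Hcont x ltac:(lra) eps He) as [e [He' H]]. exists e. split; auto.
      intros y Hy. apply H. rewrite Rabs_pos_eq; lra. }
  apply Rnot_le_gt. intro Ha. assert (Hpa : phi a <= 0) by (unfold phi; lra).
  set (b' := b - Rmin d (b - a) / 2).
  assert (Hm1 : Rmin d (b - a) <= d) by apply Rmin_l.
  assert (Hm2 : Rmin d (b - a) <= b - a) by apply Rmin_r.
  assert (Hm0 : 0 < Rmin d (b - a)) by (apply Rmin_pos; lra).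
  assert (Hb' : a < b' < b) by (unfold b'; lra).
  assert (Hpos : forall x, b' <= x < b -> phi x > 0).
  { intros x Hx. unfold phi. specialize (Hloc x ltac:(unfold b' in Hx; lra)). lra. }
  set (E := fun x => a <= x <= b' /\ phi x <= 0).
  assert (Hbd : bound E) by (exists b'; intros x [Hx _]; lra).
  assert (Hne : exists x, E x) by (exists a; split; [lra|auto]).
  destruct (completeness E Hbd Hne) as [xs [Hub Hlub]].
  assert (Hxs1 : a <= xs) by (apply Hub; split; [lra|auto]).
  assert (Hxs2 : xs <= b') by (apply Hlub; intros x [Hx _]; lra).
  assert (Hright : forall y, xs < y < b -> phi y > 0).
  { intros y Hy. destruct (Rle_or_lt b' y) as [H|H]; [apply Hpos; lra|].
    apply Rnot_le_gt. intro Hc. assert (E y) by (split; [lra|auto]).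
    specialize (Hub y H0). lra. }
  assert (Hge : phi xs >= 0).
  { apply Rnot_lt_ge. intro Hlt.
    destruct (Hrc xs ltac:(lra) (- phi xs) ltac:(lra)) as [e [He H]].
    set (y := xs + Rmin (e/2) ((b - xs)/2)).
    assert (Hy1 : Rmin (e/2) ((b - xs)/2) <= e/2) by apply Rmin_l.
    assert (Hy2 : Rmin (e/2) ((b - xs)/2) <= (b - xs)/2) by apply Rmin_r.
    assert (Hy0 : 0 < Rmin (e/2) ((b - xs)/2)) by (apply Rmin_pos; lra).
    specialize (H y ltac:(unfold y; lra)). specialize (Hright y ltac:(unfold y; lra)).
    apply Rabs_def2 in H. lra. }
  assert (Hle : phi xs <= 0).
  { apply Rnot_lt_le. intro Hgt.
    destruct (Req_dec xs a) as [->|Hne']; [lra|].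
    destruct (Hcont xs ltac:(lra) (phi xs) Hgt) as [e [He H]].
    assert (xs <= xs - e/2).
    { apply Hlub. intros x [Hx Hpx]. specialize (Hub x (conj Hx Hpx)).
      apply Rnot_lt_le. intro Hxlt.
      specialize (H x ltac:(rewrite Rabs_left1; lra)). apply Rabs_def2 in H. lra. }
    lra. }
  assert (Hzero : Cf xs = A + s*xs) by (unfold phi in *; lra).
  destruct (Hcross xs ltac:(lra) Hzero) as [eta [Heta HD]].
  set (y2 := xs + Rmin (eta/2) ((b - xs)/2)).
  assert (Hq1 : Rmin (eta/2) ((b - xs)/2) <= eta/2) by apply Rmin_l.
  assert (Hq2 : Rmin (eta/2) ((b - xs)/2) <= (b - xs)/2) by apply Rmin_r.
  assert (Hq0 : 0 < Rmin (eta/2) ((b - xs)/2)) by (apply Rmin_pos; lra).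
  assert (Hp2 : phi y2 > 0) by (apply Hright; unfold y2; lra).
  destruct (Hrc xs ltac:(lra) (phi y2) Hp2) as [e [He H]].
  set (y1 := xs + Rmin (e/2) ((y2 - xs)/2)).
  assert (Hr1 : Rmin (e/2) ((y2 - xs)/2) <= e/2) by apply Rmin_l.
  assert (Hr2 : Rmin (e/2) ((y2 - xs)/2) <= (y2 - xs)/2) by apply Rmin_r.
  assert (Hr0 : 0 < Rmin (e/2) ((y2 - xs)/2)) by (apply Rmin_pos; unfold y2; lra).
  assert (Hp1 : phi y1 < phi y2).
  { specialize (H y1 ltac:(unfold y1; lra)). apply Rabs_def2 in H. lra. }
  assert (Hy12 : y1 < y2) by (unfold y1, y2 in *; lra).
  destruct (MVT_gen phi y1 y2 (fun x => D x - s)) as [c [Hc Hmvt]].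
  - intros x Hx. rewrite Rmin_left in Hx by lra. rewrite Rmax_right in Hx by lra.
    assert (H1 : is_derive (fun x => A + s*x) x s) by (auto_derive; [exact I|ring]).
    assert (H2 : is_derive Cf x (D x)) by (apply Hder; unfold y1, y2 in *; lra).
    apply is_derive_Reals. apply is_derive_Reals in H1. apply is_derive_Reals in H2.
    exact (derivable_pt_lim_minus _ _ _ _ _ H2 H1).
  - intros x Hx. rewrite Rmin_left in Hx by lra. rewrite Rmax_right in Hx by lra.
    apply continuity_pt_filterlim. unfold phi.
    apply (continuous_minus Cf (fun x => A + s*x)).
    + assert (Hex : ex_derive Cf x) by (exists (D x); apply Hder; unfold y1, y2 in *; lra).
      exact (ex_derive_continuous Cf x Hex).
    + apply ex_derive_continuous. auto_derive. exact I.
  - rewrite Rmin_left in Hc by lra. rewrite Rmax_right in Hc by lra.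
    assert (D c < s) by (apply HD; unfold y1, y2 in *; lra).
    assert ((D c - s) * (y2 - y1) < 0) by (apply Rmult_neg_pos; lra).
    lra.
Qed.
Lemma cont2_pow (f : R -> R -> R) n x y : continuity_2d_pt f x y ->
  continuity_2d_pt (fun u v => f u v ^ n) x y.
Proof.
  intro H. induction n as [|n IH].
  - simpl. apply continuity_2d_pt_const.
  - simpl. apply (continuity_2d_pt_mult f (fun u v => f u v ^ n)); auto.
Qed.

Ltac c2d := repeat (first [apply continuity_2d_pt_plus | apply continuity_2d_pt_minus
  | apply continuity_2d_pt_mult | apply continuity_2d_pt_opp | apply continuity_2d_pt_id1
  | apply continuity_2d_pt_id2 | apply continuity_2d_pt_const | apply cont2_pow
  | apply continuity_2d_pt_inv ]).

Lemma cont2_G M g z x y : continuity_2d_pt (fun u w => Gf M g z u w) x y.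
Proof. unfold Gf, lam. c2d. Qed.

Lemma cont2_H M g z s x y : 1 + x <> 0 ->
  continuity_2d_pt (fun u w => Ff M g z u w - s * Gf M g z u w) x y.
Proof. intro Hx. unfold Ff, Gf, lam, a1, a2, a3, Rdiv. c2d. auto. Qed.

Lemma cross_ode M g z s (Cf : R -> R) x :
  1 + x <> 0 ->
  (forall eps, 0 < eps -> exists e, 0 < e /\ forall y, x < y < x + e -> Rabs (Cf y - Cf x) < eps) ->
  Gf M g z x (Cf x) < 0 -> Ff M g z x (Cf x) - s * Gf M g z x (Cf x) > 0 ->
  exists eta, 0 < eta /\ forall y, x < y < x + eta -> Ff M g z y (Cf y) / Gf M g z y (Cf y) < s.
Proof.
  intros H1x Hrc HG HH.
  destruct (cont2_G M g z x (Cf x) (mkposreal _ (Ropp_0_gt_lt_contravar _ HG))) as [d1 Hd1].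
  destruct (cont2_H M g z s x (Cf x) H1x (mkposreal _ HH)) as [d2 Hd2].
  set (d := Rmin d1 d2).
  assert (Hd : 0 < d) by (apply Rmin_pos; apply cond_pos).
  destruct (Hrc d Hd) as [e [He Hy]].
  exists (Rmin e d). split; [apply Rmin_pos; auto|].
  intros y Hyr.
  assert (Hm1 : Rmin e d <= e) by apply Rmin_l. assert (Hm2 : Rmin e d <= d) by apply Rmin_r.
  assert (Hd1' : d <= d1) by apply Rmin_l. assert (Hd2' : d <= d2) by apply Rmin_r.
  specialize (Hy y ltac:(lra)).
  assert (Hux : Rabs (y - x) < d) by (rewrite Rabs_pos_eq; lra).
  specialize (Hd1 y (Cf y) ltac:(lra) ltac:(lra)). specialize (Hd2 y (Cf y) ltac:(lra) ltac:(lra)).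
  simpl in Hd1, Hd2. apply Rabs_def2 in Hd1. apply Rabs_def2 in Hd2.
  assert (Gf M g z y (Cf y) < 0) by lra.
  assert (Ff M g z y (Cf y) - s * Gf M g z y (Cf y) > 0) by lra.
  apply Rminus_lt. 
  replace (Ff M g z y (Cf y) / Gf M g z y (Cf y) - s) with ((Ff M g z y (Cf y) - s * Gf M g z y (Cf y)) / Gf M g z y (Cf y)) by (field; lra).
  apply Rdiv_pos_neg; lra.
Qed.
Lemma rcont_C (Cf D : R -> R) a b :
  (forall x, a < x < b -> is_derive Cf x (D x)) -> filterlim Cf (at_right a) (locally (Cf a)) ->
  forall x, a <= x < b -> forall eps, 0 < eps -> exists e, 0 < e /\ forall y, x < y < x + e -> Rabs (Cf y - Cf x) < eps.
Proof.
  intros Hder Hra x Hx eps He. destruct (Req_dec x a) as [->|Hne].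
  - apply rcont_eps; auto.
  - assert (Hc : filterlim Cf (locally x) (locally (Cf x))).
    { assert (Hex : ex_derive Cf x) by (exists (D x); apply Hder; lra).
      exact (ex_derive_continuous Cf x Hex). }
    destruct (cont_eps _ _ Hc eps He) as [e [He' H]]. exists e. split; auto.
    intros y Hy. apply H. rewrite Rabs_pos_eq; lra.
Qed.

Lemma idLV g v : eval (envs 0 v g) LV / 50 = (1+v)*(g+1) + sl g * (-2 - v*(g+1)).
Proof. unfold sl. cbn [eval nth envs LV]. unfold Q2R. cbn [Qnum Qden]. field. Qed.
Lemma idLVsq g v : eval (envs 0 v g) LVsq / 2500 =
  ((1+v)*(g+1) + sl g * (-2 - v*(g+1)))^2 - 2*g*(g-1).
Proof. unfold sl. cbn [eval nth envs LVsq]. unfold Q2R. cbn [Qnum Qden]. field. Qed.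

Lemma LV1_gt g v : 4943/2048 <= g <= 3 -> -645/2048 <= v <= 0 -> Lf g v (V1g g) > C1g g.
Proof.
  intros Hg Hv.
  pose proof (pos_LV v g Hv Hg). pose proof (pos_LVsq v g Hv Hg).
  rewrite <- (Rmult_1_r (eval _ LV)) in H. pose proof (idLV g v). pose proof (idLVsq g v).
  set (K := (1+v)*(g+1) + sl g * (-2 - v*(g+1))) in *.
  assert (HK : K > 0) by lra.
  assert (HK2 : K^2 - 2*g*(g-1) > 0) by lra.
  assert (HL : Lf g v (V1g g) * (g+1) = K) by (unfold Lf, V1g, K; field; lra).
  assert (Hs : sqrt (2*g*(g-1)) < K) by (apply sqrt_lt'; nra).
  unfold C1g. apply Rlt_gt. apply Rmult_lt_reg_r with (g+1); [lra|].
  unfold Rdiv. rewrite Rmult_assoc, Rinv_l by lra. rewrite HL. lra.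
Qed.

Lemma part1 m g z C : (m = 1%nat \/ m = 2%nat) -> gamma1 < g <= 3 -> 0 < z <= z2 g ->
  Sol (INR m) g z C -> C (V1g g) > C1g g.
Proof.
  intros Hm Hg Hz HS.
  set (M := INR m).
  assert (HM : M = 1 \/ M = 2) by (unfold M; destruct Hm as [-> | ->]; simpl; [left|right]; ring).
  destruct (zpart M g z Hg Hz) as [Hg0 [Hv Hzv]].
  set (v := V8 M g z) in *.
  unfold Sol in HS. cbv zeta in HS. fold M in HS. fold v in HS.
  destruct HS as [Hv1v [[r [a [c [Hr [Hslope [Ha0 [Ha1 [Hex His]]]]]]]] [HGne [Hder [Hlim Hpos]]]]].
  assert (Hg3 : 4943/2048 <= g <= 3) by lra.
  assert (Hcs : c < sl g).
  { apply (slope_lt M g v c HM Hg3 Hv).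
    - rewrite <- Hzv. reflexivity.
    - rewrite <- Hzv. exact Hslope. }
  assert (HC8 : C8 M g z = 1 + v) by reflexivity.
  destruct (local_above a r c (sl g) v (C8 M g z) C Hr Hcs Ha0 Ha1 Hex His) as [d [Hd Hloc]].
  set (A := 1 + v - sl g * v).
  assert (HLA : forall x, Lf g v x = A + sl g * x) by (intro x; unfold Lf, A; ring).
  assert (HV1 : V1g g = -2/(g+1)) by reflexivity.
  assert (Hmain : C (V1g g) > A + sl g * V1g g).
  { apply (barrier_gen C (fun V => Ff M g z V (C V) / Gf M g z V (C V)) (V1g g) v A (sl g) Hv1v).
    - exists d. split; auto. intros x Hx. specialize (Hloc x Hx). rewrite HC8 in Hloc.
      unfold A. lra.
    - exact Hder.
    - exact Hlim.
    - intros x Hx Hcx.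
      assert (Hx1 : -1 < x).
      { rewrite HV1 in Hx. assert (-2/(g+1) > -1).
        { apply Rlt_gt. apply Rmult_lt_reg_r with (g+1); [lra|]. unfold Rdiv.
          rewrite Rmult_assoc, Rinv_l by lra. lra. }
        lra. }
      destruct (barrier_cond M g v x HM Hg3 Hv ltac:(rewrite <- HV1; lra)) as [HG HH].
      rewrite <- Hzv, HLA, <- Hcx in HG, HH.
      apply (cross_ode M g z (sl g) C x); auto; [lra|].
      apply (rcont_C C _ (V1g g) v Hder Hlim x Hx). }
  pose proof (LV1_gt g v Hg3 ltac:(lra)). rewrite HLA in H. lra.
Qed.

Theorem mainTheorem15 :
  forall (m : nat) (gamma : R),
    (m = 1%nat \/ m = 2%nat) ->
    gamma1 < gamma <= 3 ->
    (forall (z : R) (C : R -> R),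
        0 < z <= z2 gamma ->
        Sol (INR m) gamma z C ->
        C (V1g gamma) > C1g gamma) /\
    (forall (z : R) (C : R -> R),
        0 < z <= zM gamma ->
        Sol (INR m) gamma z C ->
        C (V1g gamma) = C1g gamma ->
        z2 gamma < z <= zM gamma).
Proof.
  intros m g Hm Hg. split.
  - intros z C Hz HS. apply (part1 m g z C Hm Hg Hz HS).
  - intros z C Hz HS Heq. split; [|lra].
    apply Rnot_le_lt. intro Hle.
    pose proof (part1 m g z C Hm Hg (conj (proj1 Hz) Hle) HS). lra.
Qed.
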